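(* For a strictly positive probability vector $\pi=(\pi_1,\pi_2,\pi_3,\pi_4)$ let $$\mathrm{HKY}_\pi^+=\left\{\begin{pmatrix}\ast & \pi_2\kappa & \lambda\pi_3 & \lambda\pi_4\\ \pi_1\kappa & \ast & \lambda\pi_3 & \lambda\pi_4\\ \lambda\pi_1 & \lambda\pi_2 & \ast & \pi_4\kappa\\ \lambda\pi_1 & \lambda\pi_2 & \pi_3\kappa & \ast\end{pmatrix}:\kappa,\lambda\ge 0\right\},$$ where each $\ast$ denotes the diagonal entry making the row sum zero. If $\pi_1+\pi_2\neq\pi_3+\pi_4$, then $\operatorname{span}_{\mathbb{R}}(\mathrm{HKY}_\pi^+)$ is not closed under $A\odot B=AB+BA$ (so $\mathrm{HKY}_\pi^+$ is not uniformization stable). Consequently $\mathrm{HKY}^+:=\bigcup_\pi\mathrm{HKY}_\pi^+$ (union over all strictly positive probability vectors) is not uniformization stable.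
   Context: A strictly positive probability vector has all entries positive and summing to 1. A set $\mathcal{M}$ of $4\times4$ rate matrices (zero row sums, nonnegative off-diagonal entries) is uniformization stable if for every $Q\in\mathcal{M}$ and $t\ge0$ there is $\hat Q\in\mathcal{M}$ with $e^{Qt}-I_4=\hat Q$. *)

(* Defs.v *)
From HB Require Import structures.
From mathcomp Require Import all_boot all_order all_algebra.
From mathcomp Require Import all_classical all_reals all_analysis.
Set Implicit Arguments. Unset Strict Implicit. Unset Printing Implicit Defensive.
Import Order.TTheory GRing.Theory Num.Theory.
Import numFieldNormedType.Exports.
Local Open Scope ring_scope.
Local Open Scope classical_set_scope.

Definition strictly_pos_prob (R : realType) (pi : 'I_4 -> R) : Prop :=
  (forall i, 0 < pi i) /\ \sum_(i < 4) pi i = 1.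

(* explicit indices: pi_1 = pi p1, ..., pi_4 = pi p4 *)
Definition p1 : 'I_4 := @Ordinal 4 0 isT.
Definition p2 : 'I_4 := @Ordinal 4 1 isT.
Definition p3 : 'I_4 := @Ordinal 4 2 isT.
Definition p4 : 'I_4 := @Ordinal 4 3 isT.

(* Same transition class: {1,2} (indices 0,1) and {3,4} (indices 2,3). *)
Definition hky_same_class (i j : 'I_4) : bool := ((i < 2)%N == (j < 2)%N).

Definition hky_offdiag (R : realType) (pi : 'I_4 -> R) (kappa lambda : R)
  (i j : 'I_4) : R :=
  if hky_same_class i j then pi j * kappa else lambda * pi j.

Definition hky_mx (R : realType) (pi : 'I_4 -> R) (kappa lambda : R) : 'M[R]_4 :=
  \matrix_(i, j) (if i == j then - \sum_(k < 4 | k != i) hky_offdiag pi kappa lambda i k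
                  else hky_offdiag pi kappa lambda i j).

Definition HKYplus_pi (R : realType) (pi : 'I_4 -> R) : set 'M[R]_4 :=
  [set Q | exists kappa lambda : R, 0 <= kappa /\ 0 <= lambda /\ Q = hky_mx pi kappa lambda].

Definition HKYplus (R : realType) : set 'M[R]_4 :=
  [set Q | exists pi : 'I_4 -> R, strictly_pos_prob pi /\ HKYplus_pi pi Q].

Definition mx_span (R : realType) (M : set 'M[R]_4) : set 'M[R]_4 :=
  [set B | exists (n : nat) (c : 'I_n -> R) (A : 'I_n -> 'M[R]_4),
      (forall i, M (A i)) /\ B = \sum_(i < n) c i *: A i].

Definition odot (R : realType) (A B : 'M[R]_4) : 'M[R]_4 := A * B + B * A.

Definition closed_under_odot (R : realType) (S : set 'M[R]_4) : Prop :=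
  forall A B, S A -> S B -> S (odot A B).

Definition expmx_minus_id_is (R : realType) (X Qhat : 'M[R]_4) : Prop :=
  (series (fun k : nat => (k`!%:R)^-1 *: X ^+ k)) @ \oo --> (1 + Qhat).

Definition uniformization_stable (R : realType) (M : set 'M[R]_4) : Prop :=
  forall Q, M Q -> forall t : R, 0 <= t ->
    exists Qhat, M Qhat /\ expmx_minus_id_is (t *: Q) Qhat.

(* Main.v *)
Require Import Defs.
From HB Require Import structures.
From mathcomp Require Import all_boot all_order all_algebra.
From mathcomp Require Import all_classical all_reals all_analysis.
From mathcomp Require Import ring lra.
Import Order.TTheory GRing.Theory Num.Theory.
Import numFieldNormedType.Exports.
Local Open Scope ring_scope.
Local Open Scope classical_set_scope.

Lemma sum4 (R : realType) (F : 'I_4 -> R) : \sum_(i < 4) F i = F p1 + F p2 + F p3 + F p4.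
Proof.
rewrite !big_ord_recl big_ord0 addr0 !addrA.
by congr (F _ + F _ + F _ + F _); apply/val_inj.
Qed.


Section S.
Variables (R : realType) (pi : 'I_4 -> R).
Hypothesis hpos : forall i, 0 < pi i.
Definition L := hky_mx pi 0 1.
Lemma L11 : L p1 p1 = -(pi p3 + pi p4).
Proof. rewrite /L /hky_mx mxE /= big_mkcond sum4 /= /hky_offdiag /=; ring. Qed.
Lemma L12 : L p1 p2 = 0.
Proof. rewrite /L /hky_mx mxE /= /hky_offdiag /=; ring. Qed.
Lemma L13 : L p1 p3 = pi p3.
Proof. rewrite /L /hky_mx mxE /= /hky_offdiag /=; ring. Qed.
Lemma L14 : L p1 p4 = pi p4.
Proof. rewrite /L /hky_mx mxE /= /hky_offdiag /=; ring. Qed.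
Lemma L21 : L p2 p1 = 0.
Proof. rewrite /L /hky_mx mxE /= /hky_offdiag /=; ring. Qed.
Lemma L22 : L p2 p2 = -(pi p3 + pi p4).
Proof. rewrite /L /hky_mx mxE /= big_mkcond sum4 /= /hky_offdiag /=; ring. Qed.
Lemma L23 : L p2 p3 = pi p3.
Proof. rewrite /L /hky_mx mxE /= /hky_offdiag /=; ring. Qed.
Lemma L24 : L p2 p4 = pi p4.
Proof. rewrite /L /hky_mx mxE /= /hky_offdiag /=; ring. Qed.
Lemma L31 : L p3 p1 = pi p1.
Proof. rewrite /L /hky_mx mxE /= /hky_offdiag /=; ring. Qed.
Lemma L32 : L p3 p2 = pi p2.
Proof. rewrite /L /hky_mx mxE /= /hky_offdiag /=; ring. Qed.
Lemma L33 : L p3 p3 = -(pi p1 + pi p2).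
Proof. rewrite /L /hky_mx mxE /= big_mkcond sum4 /= /hky_offdiag /=; ring. Qed.
Lemma L34 : L p3 p4 = 0.
Proof. rewrite /L /hky_mx mxE /= /hky_offdiag /=; ring. Qed.
Lemma L41 : L p4 p1 = pi p1.
Proof. rewrite /L /hky_mx mxE /= /hky_offdiag /=; ring. Qed.
Lemma L42 : L p4 p2 = pi p2.
Proof. rewrite /L /hky_mx mxE /= /hky_offdiag /=; ring. Qed.
Lemma L43 : L p4 p3 = 0.
Proof. rewrite /L /hky_mx mxE /= /hky_offdiag /=; ring. Qed.
Lemma L44 : L p4 p4 = -(pi p1 + pi p2).
Proof. rewrite /L /hky_mx mxE /= big_mkcond sum4 /= /hky_offdiag /=; ring. Qed.

Definition a := pi p1 + pi p2.
Definition b := pi p3 + pi p4.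
Definition s := a + b.
Lemma a_gt0 : 0 < a. Proof. have := hpos p1; have := hpos p2; rewrite /a; lra. Qed.
Lemma b_gt0 : 0 < b. Proof. have := hpos p3; have := hpos p4; rewrite /b; lra. Qed.
Lemma s_gt0 : 0 < s. Proof. have := a_gt0; have := b_gt0; rewrite /s; lra. Qed.

Definition Z (k : nat) : R := 0 ^+ k.
Definition Ms (k : nat) : R := (- s) ^+ k.
Definition Bk (k : nat) : R := (- b) ^+ k.
Definition Ak (k : nat) : R := (- a) ^+ k.

Definition r11 k := pi p1 / s * Z k + pi p1 * b / (a * s) * Ms k + pi p2 / a * Bk k.
Definition r12 k := pi p2 / s * Z k + pi p2 * b / (a * s) * Ms k - pi p2 / a * Bk k.
Definition r13 k := pi p3 / s * Z k - pi p3 / s * Ms k.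
Definition r14 k := pi p4 / s * Z k - pi p4 / s * Ms k.
Definition r41 k := pi p1 / s * Z k - pi p1 / s * Ms k.
Definition r42 k := pi p2 / s * Z k - pi p2 / s * Ms k.
Definition r43 k := pi p3 / s * Z k + pi p3 * a / (b * s) * Ms k - pi p3 / b * Ak k.
Definition r44 k := pi p4 / s * Z k + pi p4 * a / (b * s) * Ms k + pi p3 / b * Ak k.

Lemma powL k :
  (L ^+ k) p1 p1 = r11 k /\ (L ^+ k) p1 p2 = r12 k /\ (L ^+ k) p1 p3 = r13 k /\
      (L ^+ k) p1 p4 = r14 k /\ (L ^+ k) p4 p1 = r41 k /\ (L ^+ k) p4 p2 = r42 k /\
      (L ^+ k) p4 p3 = r43 k /\ (L ^+ k) p4 p4 = r44 k.
Proof.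
have ha := a_gt0; have hb := b_gt0; have hs := s_gt0.
have ha0 : a != 0 by rewrite gt_eqF.
have hb0 : b != 0 by rewrite gt_eqF.
have hs0 : s != 0 by rewrite gt_eqF.
elim: k => [|k [e11 [e12 [e13 [e14 [e41 [e42 [e43 e44]]]]]]]].
  rewrite /r11 /r12 /r13 /r14 /r41 /r42 /r43 /r44 /Z /Ms /Bk /Ak !expr0 !mxE /=.
  rewrite /s /a /b in ha0 hb0 hs0 *.
  by repeat split; field; rewrite ?ha0 ?hb0 ?hs0.
rewrite exprSr -mulmxE !mxE !sum4 e11 e12 e13 e14 e41 e42 e43 e44.
rewrite !(L11, L12, L13, L14, L21, L22, L23, L24, L31, L32, L33, L34, L41, L42, L43, L44).
rewrite /r11 /r12 /r13 /r14 /r41 /r42 /r43 /r44 /Z /Ms /Bk /Ak !exprS.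
rewrite /s /a /b in ha0 hb0 hs0 *.
by repeat split; field; rewrite ?ha0 ?hb0 ?hs0.
Qed.

Lemma cvgE (x : R) : (series (exp_coeff x)) @ \oo --> (expR x).
Proof. exact: is_cvg_series_exp_coeff. Qed.

Lemma cvg3 (t c0 c1 c2 x0 x1 x2 : R) :
  (fun n => \sum_(0 <= k < n) (k`!%:R)^-1 * (t ^+ k * (c0 * x0 ^+ k + c1 * x1 ^+ k + c2 * x2 ^+ k)))
    @ \oo --> (c0 * expR (t * x0) + c1 * expR (t * x1) + c2 * expR (t * x2)).
Proof.
have -> : (fun n => \sum_(0 <= k < n) (k`!%:R)^-1 * (t ^+ k * (c0 * x0 ^+ k + c1 * x1 ^+ k + c2 * x2 ^+ k)))
  = (fun n => c0 * series (exp_coeff (t * x0)) n + c1 * series (exp_coeff (t * x1)) n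
              + c2 * series (exp_coeff (t * x2)) n).
  apply/funext => n; rewrite /series /= !mulr_sumr -!big_split /=.
  by apply: eq_bigr => k _; rewrite /exp_coeff /= !exprMn; ring.
apply: cvgD; first apply: cvgD.
all: apply: cvgM; [exact: cvg_cst | exact: cvgE].
Qed.

Lemma entry_lim (Qh : 'M[R]_4) (t : R) i j c0 c1 c2 x0 x1 x2 :
  expmx_minus_id_is (t *: L) Qh ->
  (forall k, (L ^+ k) i j = c0 * x0 ^+ k + c1 * x1 ^+ k + c2 * x2 ^+ k) ->
  (1 + Qh) i j = c0 * expR (t * x0) + c1 * expR (t * x1) + c2 * expR (t * x2).
Proof.
move=> H hL.
have H1 : ((fun M : 'M[R]_4 => M i j) \o
    series (fun k : nat => (k`!%:R)^-1 *: (t *: L) ^+ k)) @ \oo --> (1 + Qh) i j.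
  apply: continuous_cvg; [exact: (@coord_continuous R 4 4 i j) | exact: H].
have H2 := cvg3 t c0 c1 c2 x0 x1 x2.
have E : ((fun M : 'M[R]_4 => M i j) \o
    series (fun k : nat => (k`!%:R)^-1 *: (t *: L) ^+ k)) =
  (fun n => \sum_(0 <= k < n) (k`!%:R)^-1 * (t ^+ k * (c0 * x0 ^+ k + c1 * x1 ^+ k + c2 * x2 ^+ k))).
  apply/funext => n; rewrite /series /= summxE.
  by apply: eq_bigr => k _; rewrite exprZn !mxE hL.
rewrite E in H1.
exact: (cvg_unique (@Rhausdorff R) H1 H2).
Qed.

Definition G (t : R) := (b * b - a * a) / s * expR (t * (- s)) - b * expR (t * (- b)) + a * expR (t * (- a)).

Lemma one_off (Qh : 'M[R]_4) i j : i != j -> (1 + Qh) i j = Qh i j.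
Proof. by move=> /negbTE hij; rewrite !mxE hij mulr0n add0r. Qed.

Lemma key t Qh : 0 < t -> expmx_minus_id_is (t *: L) Qh ->
  Qh p1 p2 * Qh p1 p3 = Qh p4 p3 * Qh p4 p2 -> G t = 0.
Proof.
move=> t0 H Hinv.
have ha := a_gt0; have hb := b_gt0; have hs := s_gt0.
have h12 := entry_lim _ _ p1 p2 (pi p2 / s) (pi p2 * b / (a * s)) (- (pi p2 / a)) 0 (- s) (- b) H.
have h13 := entry_lim _ _ p1 p3 (pi p3 / s) (- (pi p3 / s)) 0 0 (- s) 0 H.
have h43 := entry_lim _ _ p4 p3 (pi p3 / s) (pi p3 * a / (b * s)) (- (pi p3 / b)) 0 (- s) (- a) H.
have h42 := entry_lim _ _ p4 p2 (pi p2 / s) (- (pi p2 / s)) 0 0 (- s) 0 H.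
lapply h12; last first.
  move=> k; have [_ [e _]] := powL k; rewrite e /r12 /Z /Ms /Bk; ring.
clear h12 => h12; rewrite one_off // in h12.
lapply h13; last first.
  move=> k; have [_ [_ [e _]]] := powL k; rewrite e /r13 /Z /Ms; ring.
clear h13 => h13; rewrite one_off // in h13.
lapply h43; last first.
  move=> k; have [_ [_ [_ [_ [_ [_ [e _]]]]]]] := powL k; rewrite e /r43 /Z /Ms /Ak; ring.
clear h43 => h43; rewrite one_off // in h43.
lapply h42; last first.
  move=> k; have [_ [_ [_ [_ [_ [e _]]]]]] := powL k; rewrite e /r42 /Z /Ms; ring.
clear h42 => h42; rewrite one_off // in h42.
rewrite !mulr0 expR0 in h12 h13 h43 h42.
have hE1 : expR (t * - s) < 1 by rewrite expR_lt1 mulrN oppr_lt0 mulr_gt0.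
have hc : 0 < pi p2 * pi p3 * (1 - expR (t * - s)) / (s * a * b).
  apply: divr_gt0; last by rewrite !mulr_gt0.
  by rewrite !mulr_gt0 // subr_gt0.
have eq : pi p2 * pi p3 * (1 - expR (t * - s)) / (s * a * b) * G t
    = Qh p1 p2 * Qh p1 p3 - Qh p4 p3 * Qh p4 p2.
  rewrite h12 h13 h43 h42 /G; field.
  by rewrite !gt_eqF.
move: eq; rewrite Hinv subrr => /eqP; rewrite mulf_eq0 => /orP [/eqP h|/eqP //].
by move: hc; rewrite h ltxx.
Qed.

Lemma expineq (x y : R) : 0 < x -> x < y ->
  y * expR (2 / x * (- y)) < x * expR (2 / x * (- x)).
Proof.
move=> hx hxy.
have -> : 2 / x * (- x) = 2 / x * (- y) + 2 / x * (y - x) by ring.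
rewrite expRD.
have he := expR_gt0 (2 / x * (- y)).
have h1 := expR_ge1Dx (2 / x * (y - x)).
have ht : x * (2 / x) = 2 by field; rewrite gt_eqF.
have h2 : x * (1 + 2 / x * (y - x)) <= x * expR (2 / x * (y - x)) by rewrite ler_wpM2l // ltW.
have h3 : x * (1 + 2 / x * (y - x)) = x + 2 * (y - x) by rewrite mulrDr mulr1 mulrA ht.
set E := expR _ in he h1 h2 *; set F := expR _ in h1 h2 *.
nra.
Qed.

Lemma G_ne0 : a != b -> exists t, 0 < t /\ G t != 0.
Proof.
have ha := a_gt0; have hb := b_gt0; have hs := s_gt0.
case: (ltgtP a b) => // hab _.
- exists (2 / a); split; first by rewrite divr_gt0.
  have := expineq _ _ ha hab; have := expR_gt0 (2 / a * - s).
  have hq : 0 < (b * b - a * a) / s by rewrite divr_gt0 // subr_gt0; nra.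
  rewrite /G; set E1 := expR _; set Eb := expR _; set Ea := expR _ => h1 h2.
  apply/negP => /eqP; nra.
- exists (2 / b); split; first by rewrite divr_gt0.
  have := expineq _ _ hb hab; have := expR_gt0 (2 / b * - s).
  have hq : 0 < (a * a - b * b) / s by rewrite divr_gt0 // subr_gt0; nra.
  have hq' : (b * b - a * a) / s = - ((a * a - b * b) / s) by ring.
  rewrite /G hq'; set E1 := expR _; set Eb := expR _; set Ea := expR _ => h1 h2.
  apply/negP => /eqP; nra.
Qed.

Lemma hky_inv (pi' : 'I_4 -> R) k l (Q : 'M[R]_4) : Q = hky_mx pi' k l ->
  Q p1 p2 * Q p1 p3 = Q p4 p3 * Q p4 p2.
Proof. move=> ->; rewrite /hky_mx !mxE /= /hky_offdiag /=; ring. Qed.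

Lemma not_stable (M : set 'M[R]_4) : a != b -> M L ->
  (forall Q, M Q -> Q p1 p2 * Q p1 p3 = Q p4 p3 * Q p4 p2) -> ~ uniformization_stable M.
Proof.
move=> ab ML inv stab.
have [t [t0 Gt]] := G_ne0 ab.
have [Qh [MQh HQh]] := stab L ML t (ltW t0).
by move/eqP: Gt; apply; apply: (key _ _ t0 HQh); apply: inv.
Qed.

Lemma L_in : HKYplus_pi pi L.
Proof. by exists 0, 1; split; [|split]. Qed.

Lemma span_phi B : mx_span (HKYplus_pi pi) B -> pi p4 * B p1 p2 - pi p2 * B p3 p4 = 0.
Proof.
move=> [n [c [A [hA ->]]]].
rewrite !summxE !mulr_sumr -sumrB big1 // => i _.
have [k [l [_ [_ ->]]]] := hA i.
rewrite !mxE /= /hky_offdiag /=; ring.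
Qed.

Lemma not_closed : a != b -> ~ closed_under_odot (mx_span (HKYplus_pi pi)).
Proof.
move=> ab cl.
have Ls : mx_span (HKYplus_pi pi) L.
  exists 1%N, (fun _ => 1), (fun _ => L); split; first by move=> _; exact: L_in.
  by rewrite big_ord1 scale1r.
have := span_phi _ (cl _ _ Ls Ls).
rewrite /odot !mxE !sum4.
rewrite !(L11, L12, L13, L14, L21, L22, L23, L24, L31, L32, L33, L34, L41, L42, L43, L44).
have hp2 := hpos p2; have hp4 := hpos p4.
have ha0 : b - a != 0 by rewrite subr_eq0 eq_sym.
move=> h; have : 2 * pi p2 * pi p4 * (b - a) = 0 by rewrite -h /a /b; ring.
by move/eqP; rewrite !mulf_eq0 (negbTE ha0) !gt_eqF.
Qed.
End S.

Theorem mainTheorem8 (R : realType) (pi : 'I_4 -> R) :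
  strictly_pos_prob pi ->
  pi p1 + pi p2 != pi p3 + pi p4 ->
  ~ closed_under_odot (mx_span (HKYplus_pi pi)) /\
  ~ uniformization_stable (HKYplus_pi pi) /\
  ~ uniformization_stable (@HKYplus R).
Proof.
move=> hp ab; have hpos := hp.1.
split; first exact: (@not_closed R pi hpos ab).
split.
- apply: (@not_stable R pi hpos _ ab (@L_in R pi)) => Q [k [l [_ [_ ->]]]].
  exact: (@hky_inv R _ _ _ _ (erefl _)).
- apply: (@not_stable R pi hpos _ ab); first by exists pi; split => //; exact: L_in.
  move=> Q [pi' [_ [k [l [_ [_ ->]]]]]].
  exact: (@hky_inv R _ _ _ _ (erefl _)).
Qed.
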